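(* Let $(M,\diamond,\bullet,\alpha_M)$ be a module over the multiplicative Hom-post-Lie algebra $(L,[\cdot,\cdot],\cdot,\alpha)$, and let $k,n$ be non-negative integers. Define $x\diamond^{0,k}m=\alpha_M^{2^k-1}(\alpha^n(x)\diamond m)$ and $x\bullet^{0,k}m=\alpha_M^{2^k-1}(\alpha^n(x)\bullet m)$ for $x\in L$, $m\in M$. Then $(M,\diamond^{0,k},\bullet^{0,k},\alpha_M^{2^k})$ is a module over $(L,\alpha^{2^k-1}\circ[\cdot,\cdot],\alpha^{2^k-1}\circ\cdot,\alpha^{2^k})$.
   Context: All vector spaces are over a field $\mathbb{K}$ of characteristic $\neq 2$. A Hom-Lie algebra is $(L,[\cdot,\cdot],\alpha)$ with $[\cdot,\cdot]$ bilinear skew-symmetric, $\alpha$ linear, and $[\alpha(x),[y,z]]+[\alpha(y),[z,x]]+[\alpha(z),[x,y]]=0$. A Hom-post-Lie algebra $(L,[\cdot,\cdot],\cdot,\alpha)$ is a Hom-Lie algebra with bilinear $\cdot$ such that $\alpha(z)\cdot[x,y]-[z\cdot x,\alpha(y)]-[\alpha(x),z\cdot y]=0$ and $\alpha(z)\cdot(y\cdot x)-\alpha(y)\cdot(z\cdot x)+(y\cdot z)\cdot\alpha(x)-(z\cdot y)\cdot\alpha(x)+[y,z]\cdot\alpha(x)=0$ for all $x,y,z$; it is multiplicative if $\alpha([x,y])=[\alpha(x),\alpha(y)]$ and $\alpha(x\cdot y)=\alpha(x)\cdot\alpha(y)$. A module over $L$ is a vector space $M$ with linear $\alpha_M$ and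 bilinear $\diamond,\bullet:L\otimes M\to M$ such that for all $x,y\in L,m\in M$: (i) $\alpha_M(x\diamond m)=\alpha(x)\diamond\alpha_M(m)$, $\alpha_M(x\bullet m)=\alpha(x)\bullet\alpha_M(m)$; (ii) $[x,y]\diamond\alpha_M(m)=\alpha(x)\diamond(y\diamond m)-\alpha(y)\diamond(x\diamond m)$; (iii) $(x\cdot y)\diamond\alpha_M(m)=\alpha(x)\bullet(y\diamond m)-\alpha(y)\diamond(x\bullet m)$; (iv) $[x,y]\bullet\alpha_M(m)=\alpha(x)\bullet(y\bullet m)-\alpha(y)\bullet(x\bullet m)-(x\cdot y)\bullet\alpha_M(m)+(y\cdot x)\bullet\alpha_M(m)$. The same definition applies to the Hom-post-Lie algebra $(L,\alpha^{2^k-1}\circ[\cdot,\cdot],\alpha^{2^k-1}\circ\cdot,\alpha^{2^k})$. *)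

(* Defs.v *)
From HB Require Import structures.
From mathcomp Require Import all_boot all_order all_algebra.
Set Implicit Arguments. Unset Strict Implicit. Unset Printing Implicit Defensive.
Import GRing.Theory.
Local Open Scope ring_scope.

Section HomPostLie.
Variables (K : fieldType) (L M : lmodType K).

Definition is_lin (V W : lmodType K) (f : V -> W) :=
  forall (a : K) (x y : V), f (a *: x + y) = a *: f x + f y.

Definition is_bilin (A B C : lmodType K) (f : A -> B -> C) :=
  (forall (a : K) (x y : A) (z : B), f (a *: x + y) z = a *: f x z + f y z) /\
  (forall (a : K) (x : A) (y z : B), f x (a *: y + z) = a *: f x y + f x z).

Definition is_HomLie (br : L -> L -> L) (al : L -> L) :=
  [/\ is_bilin br, is_lin al,
      (forall x y, br x y = - br y x) &
      (forall x y z, br (al x) (br y z) + br (al y) (br z x) + br (al z) (br x y) = 0)].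

Definition is_HomPostLie (br dot : L -> L -> L) (al : L -> L) :=
  [/\ is_HomLie br al, is_bilin dot,
      (forall x y z, dot (al z) (br x y) - br (dot z x) (al y) - br (al x) (dot z y) = 0) &
      (forall x y z, dot (al z) (dot y x) - dot (al y) (dot z x)
                     + dot (dot y z) (al x) - dot (dot z y) (al x)
                     + dot (br y z) (al x) = 0)].

Definition is_multiplicative (br dot : L -> L -> L) (al : L -> L) :=
  (forall x y, al (br x y) = br (al x) (al y)) /\
  (forall x y, al (dot x y) = dot (al x) (al y)).

Definition is_module (br dot : L -> L -> L) (al : L -> L)
  (dia bul : L -> M -> M) (alM : M -> M) :=
  [/\ is_lin alM, is_bilin dia, is_bilin bul,
      (forall x m, alM (dia x m) = dia (al x) (alM m)) /\
      (forall x m, alM (bul x m) = bul (al x) (alM m)) &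
      [/\ (forall x y m, dia (br x y) (alM m) = dia (al x) (dia y m) - dia (al y) (dia x m)),
          (forall x y m, dia (dot x y) (alM m) = bul (al x) (dia y m) - dia (al y) (bul x m)) &
          (forall x y m, bul (br x y) (alM m) = bul (al x) (bul y m) - bul (al y) (bul x m)
                       - bul (dot x y) (alM m) + bul (dot y x) (alM m))]].

End HomPostLie.

(* Main.v *)
Require Import Defs.
From mathcomp Require Import all_boot all_order all_algebra.
Local Open Scope ring_scope.
Import GRing.Theory.

Section Aux.
Set Implicit Arguments.
Variables (K : fieldType).

Lemma lin0 (V W : lmodType K) (f : V -> W) : is_lin f -> f 0 = 0.
Proof.
move=> h; have e := h 1 0 0; rewrite !scale1r addr0 in e.
by apply/(addrI (f 0)); rewrite addr0 -e.
Qed.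

Lemma linD (V W : lmodType K) (f : V -> W) x y : is_lin f -> f (x + y) = f x + f y.
Proof. by move=> h; have := h 1 x y; rewrite !scale1r. Qed.

Lemma linN (V W : lmodType K) (f : V -> W) x : is_lin f -> f (- x) = - f x.
Proof.
move=> h; have := h (-1) x 0; rewrite addr0 (lin0 h) addr0 !scaleN1r; done.
Qed.

Lemma linB (V W : lmodType K) (f : V -> W) x y : is_lin f -> f (x - y) = f x - f y.
Proof. by move=> h; rewrite linD // linN. Qed.

Lemma iter_lin (V : lmodType K) (f : V -> V) j : is_lin f -> is_lin (iter j f).
Proof.
move=> h; elim: j => [|j IH] a x y //=.
by rewrite IH h.
Qed.

Lemma iter_morph2 (A B C : Type) (fa : A -> A) (fb : B -> B) (fc : C -> C)
  (g : A -> B -> C) : (forall x y, fc (g x y) = g (fa x) (fb y)) ->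
  forall j x y, iter j fc (g x y) = g (iter j fa x) (iter j fb y).
Proof. by move=> h; elim=> [|j IH] x y //=; rewrite IH h. Qed.

End Aux.

Lemma gen (K : fieldType) (L M : lmodType K)
  (br dot : L -> L -> L) (al : L -> L)
  (dia bul : L -> M -> M) (alM : M -> M) (N n : nat) :
  is_HomPostLie br dot al ->
  is_multiplicative br dot al ->
  is_module br dot al dia bul alM ->
  is_module (fun x y => iter N al (br x y))
            (fun x y => iter N al (dot x y))
            (iter N.+1 al)
            (fun x m => iter N alM (dia (iter n al x) m))
            (fun x m => iter N alM (bul (iter n al x) m))
            (iter N.+1 alM).
Proof.
move=> [[_ linA _ _] _ _ _] [mbr mdot] [linB' [dl dr] [bl br'] [cdia cbul] [m1 m2 m3]].
have ibr := @iter_morph2 _ _ _ _ _ _ _ mbr; have idot := @iter_morph2 _ _ _ _ _ _ _ mdot.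
have idia := @iter_morph2 _ _ _ _ _ _ _ cdia; have ibul := @iter_morph2 _ _ _ _ _ _ _ cbul.
have lNM := iter_lin N linB'.
have lnA := iter_lin n linA.
have comm : forall a b (z : L), iter a al (iter b al z) = iter b al (iter a al z).
  by move=> a b z; rewrite -!iterD addnC.
split.
- exact: iter_lin.
- split => a x y z.
    by rewrite lnA dl lNM.
  by rewrite dr lNM.
- split => a x y z.
    by rewrite lnA bl lNM.
  by rewrite br' lNM.
- split => x m.
    by rewrite -iterD addSn -addnS iterD idia comm.
  by rewrite -iterD addSn -addnS iterD ibul comm.
- split => x y m.
  + rewrite comm !ibr iterS (comm _ N.+1) iterS (comm _ N.+1) iterS m1 linB //.
    by rewrite (idia N (iter n al y) m) (idia N (iter n al x) m).
  + rewrite comm !idot iterS (comm _ N.+1) iterS (comm _ N.+1) iterS m2 linB //.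
    by rewrite (idia N (iter n al y) m) (ibul N (iter n al x) m).
  + rewrite comm !ibr iterS (comm _ N.+1) iterS (comm _ N.+1) iterS m3 (linD _ _ lNM) !(linB _ _ lNM).
    rewrite (ibul N (iter n al y) m) (ibul N (iter n al x) m).
    rewrite ?(comm n N (dot x y)) ?(comm n N (dot y x)) !idot.
    done.
Qed.

Theorem mainTheorem7 (K : fieldType) (L M : lmodType K)
  (br dot : L -> L -> L) (al : L -> L)
  (dia bul : L -> M -> M) (alM : M -> M) (k n : nat) :
  (2%:R : K) != 0 ->
  is_HomPostLie br dot al ->
  is_multiplicative br dot al ->
  is_module br dot al dia bul alM ->
  is_module (fun x y => iter (2 ^ k - 1) al (br x y))
            (fun x y => iter (2 ^ k - 1) al (dot x y))
            (iter (2 ^ k) al)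
            (fun x m => iter (2 ^ k - 1) alM (dia (iter n al x) m))
            (fun x m => iter (2 ^ k - 1) alM (bul (iter n al x) m))
            (iter (2 ^ k) alM).
Proof.
move=> _ H1 H2 H3.
have e : (2 ^ k = (2 ^ k - 1).+1)%N by rewrite subn1 prednK // expn_gt0.
move: e; set N := (2 ^ k - 1)%N => ->.
exact: gen.
Qed.
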